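(* Let $\widetilde{\bm{A}}\in\mathbb{C}^{N\times N}$, let $\widetilde{\bm{c}}\in\mathbb{C}^{N}$ be nonzero, and let $h_i\in\mathbb{R}_{>0}$. Let $\bm{V}_{m+1}=[\bm{v}_1,\dots,\bm{v}_{m+1}]$, $\bm{H}_m$, $\bm{K}_m$ and $h_{m+1,m}$ come from a rational Arnoldi decomposition of $\widetilde{\bm{A}}$ with starting vector $\widetilde{\bm{c}}$ (as described in the context), in which the pole of the final iteration is $\xi_{m-1}=\infty$, so that $\bm{K}_m$ is invertible and the rational Krylov relation $$\widetilde{\bm{A}}\bm{V}_m = \bm{V}_m \bm{H}_m \bm{K}_m^{-1} + h_{m+1,m}\, \bm{v}_{m+1} \bm{e}_m^\ast \bm{K}_m^{-1}$$ holds. Then the error of the rational Krylov approximation $\|\widetilde{\bm{c}}\|_2 \bm{V}_m e^{h_i \bm{H}_m\bm{K}_m^{-1}} \bm{e}_1$ to $e^{h_i \widetilde{\bm{A}}}\widetilde{\bm{c}}$ is given by $$e^{h_i \widetilde{\bm{A}}}\widetilde{\bm{c}} - \|\widetilde{\bm{c}}\|_2 \bm{V}_m e^{h_i \bm{H}_m\bm{K}_m^{-1}} \bm{e}_1 = h_i \|\widetilde{\bm{c}}\|_2\, h_{m+1,m} \sum_{k=1}^\infty \left(\bm{e}_m^\ast \bm{K}_m^{-1} \varphi_k(h_i \bm{H}_m\bm{K}_m^{-1}) \bm{e}_1\right) (h_i \widetilde{\bm{A}})^{k-1} \bm{v}_{m+1}.$$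
   Context: The $\varphi$-functions are defined by $\varphi_0(z)=e^z$ and $\varphi_{k}(z)=\sum_{j=0}^\infty \frac{z^j}{(j+k)!}$ for $k\ge 1$; equivalently $\varphi_{k+1}(z)=\frac{\varphi_k(z)-\varphi_k(0)}{z}$ with $\varphi_k(0)=1/k!$; they are applied to square matrices via their power series. The rational Krylov subspace of size $m$ with poles $\xi_1,\dots,\xi_{m-1}\in\mathbb{C}\cup\{\infty\}$ (none equal to an eigenvalue of $\widetilde{\bm{A}}$) is $\mathcal{Q}_m(\widetilde{\bm{A}},\widetilde{\bm{c}})=q_{m-1}(\widetilde{\bm{A}})^{-1}\mathrm{span}\{\widetilde{\bm{c}},\widetilde{\bm{A}}\widetilde{\bm{c}},\dots,\widetilde{\bm{A}}^{m-1}\widetilde{\bm{c}}\}$ with $q_{m-1}(z)=\prod_{j=1}^{m-1}(1-z/\xi_j)$ (factors with $\xi_j=\infty$ are $1$). The rational Arnoldi algorithm produces orthonormal vectors $\bm{v}_1=\widetilde{\bm{c}}/\|\widetilde{\bm{c}}\|_2,\bm{v}_2,\dots,\bm{v}_{m+1}$ (so $\bm{V}_m=[\bm{v}_1,\dots,\bm{v}_m]$ is an orthonormal basis of $\mathcal{Q}_m$ and $\bm{V}_m\bm{e}_1=\widetilde{\bm{c}}/\|\widetilde{\bm{c}}\|_2$) satisfying $\widetilde{\bm{A}}\bm{V}_{m+1}\underline{\bm{K}_m}=\bm{V}_{m+1}\underline{\bm{H}_m}$, where $\underline{\bm{H}_m}=\begin{pmatrix}\bm{H}_m\\ h_{m+1,m}\bm{e}_m^\ast\end{pmatrix}$,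 $\underline{\bm{K}_m}=\begin{pmatrix}\bm{I}_m+\bm{H}_m\bm{D}_m\\ h_{m+1,m}\xi_m^{-1}\bm{e}_m^\ast\end{pmatrix}$, $\bm{D}_m=\mathrm{diag}(\xi_1^{-1},\dots,\xi_m^{-1})$ (with $\infty^{-1}=0$), $\bm{H}_m,\bm{K}_m=\bm{I}_m+\bm{H}_m\bm{D}_m\in\mathbb{C}^{m\times m}$, $h_{m+1,m}\in\mathbb{C}$, and $\bm{e}_1,\bm{e}_m$ are the first and $m$th unit vectors in $\mathbb{C}^m$. With the final pole infinite this yields the relation stated in the claim. *)

(* Defs.v *)
From HB Require Import structures.
From mathcomp Require Import all_boot all_order all_algebra.
From mathcomp Require Import all_classical all_reals all_analysis.
From mathcomp Require Import complex.
Import numFieldNormedType.Exports.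
Set Implicit Arguments. Unset Strict Implicit. Unset Printing Implicit Defensive.
Import Order.TTheory GRing.Theory Num.Theory.
Local Open Scope ring_scope.
Local Open Scope complex_scope.
Local Open Scope classical_set_scope.

Section Defs.
Variable R : realType.
Local Notation C := R[i].

Definition mx_cvg (p q : nat) (u : nat -> 'M[C]_(p, q)) (L : 'M[C]_(p, q)) : Prop :=
  forall i j,
    ((fun n => complex.Re (u n i j)) @ \oo --> complex.Re (L i j)) /\
    ((fun n => complex.Im (u n i j)) @ \oo --> complex.Im (L i j)).

Definition mx_series (p q : nat) (u : nat -> 'M[C]_(p, q)) (L : 'M[C]_(p, q)) : Prop :=
  mx_cvg (fun n => \sum_(k < n) u k) L.

Definition mx_lim (p q : nat) (u : nat -> 'M[C]_(p, q)) : 'M[C]_(p, q) :=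
  \matrix_(i, j) ((lim ((fun n => complex.Re (u n i j)) @ \oo)) +i*
                  (lim ((fun n => complex.Im (u n i j)) @ \oo))).

Definition phi (n : nat) (k : nat) (M : 'M[C]_n) : 'M[C]_n :=
  mx_lim (fun N => \sum_(j < N) ((j + k)`!%:R)^-1 *: M ^+ j).

Definition mexp (n : nat) (M : 'M[C]_n) : 'M[C]_n := phi 0 M.

Definition norm2 (n : nat) (c : 'cV[C]_n) : C :=
  (Num.sqrt (\sum_i (complex.Re (c i 0) ^+ 2 + complex.Im (c i 0) ^+ 2)))%:C.

Definition adjmx (p q : nat) (M : 'M[C]_(p, q)) : 'M[C]_(q, p) := (map_mx conjc M)^T.

(* poles are encoded through their inverses: pinv j = xi_(j+1)^-1, with
   xi = infinity encoded by pinv j = 0. *)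
Definition qmx (N : nat) (A : 'M[C]_N) (pinv : nat -> C) (k : nat) : 'M[C]_N :=
  \prod_(j < k) (1%:M - pinv j *: A).

(* a matrix whose ROWS are q_(k-1)(A)^-1 A^i c, i < k; its row space is the
   rational Krylov space Q_k(A, c) *)
Definition krylov_rat (N : nat) (A : 'M[C]_N) (c : 'cV[C]_N) (pinv : nat -> C)
    (k : nat) : 'M[C]_(k, N) :=
  \matrix_(i < k, l < N) (invmx (qmx A pinv k.-1) *m (A ^+ i *m c)) l 0.

End Defs.

(* Main.v *)
Require Import Defs.
From HB Require Import structures.
From mathcomp Require Import all_boot all_order all_algebra.
From mathcomp Require Import all_classical all_reals all_analysis.
From mathcomp Require Import complex.
From mathcomp Require Import ring lra.
Import numFieldNormedType.Exports.
Set Implicit Arguments. Unset Strict Implicit. Unset Printing Implicit Defensive.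
Import Order.TTheory GRing.Theory Num.Theory.
Local Open Scope ring_scope.
Local Open Scope complex_scope.
Local Open Scope classical_set_scope.

Section S.
Variable R : realType.
Local Notation C := R[i].
Definition nz (z : C) : R := `|complex.Re z| + `|complex.Im z|.
Lemma nz_ge0 z : 0 <= nz z.
Proof. by rewrite /nz addr_ge0. Qed.
Lemma nzD a b : nz (a + b) <= nz a + nz b.
Proof. case: a => a1 a2; case: b => b1 b2; rewrite /nz /=.
have := ler_normD a1 b1; have := ler_normD a2 b2. lra. Qed.
Lemma nzN a : nz (- a) = nz a.
Proof. by case: a => a1 a2; rewrite /nz /= !normrN. Qed.
Lemma nzM a b : nz (a * b) <= nz a * nz b.
Proof. case: a => a1 a2; case: b => b1 b2; rewrite /nz /=.
rewrite mulrDr !mulrDl -!normrM.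
have := ler_normB (a1*b1) (a2*b2); have := ler_normD (a1*b2) (a2*b1). lra. Qed.
Lemma nz_eq0 a : nz a = 0 -> a = 0.
Proof. case: a => a1 a2; rewrite /nz /= => h.
have h1 : `|a1| = 0 by have := normr_ge0 a1; have := normr_ge0 a2; lra.
have h2 : `|a2| = 0 by have := normr_ge0 a1; have := normr_ge0 a2; lra.
by move/eqP: h1; rewrite normr_eq0 => /eqP->; move/eqP: h2; rewrite normr_eq0 => /eqP->. Qed.
Lemma nz0 : nz 0 = 0. Proof. by rewrite /nz /= normr0 addr0. Qed.
Lemma nzRe a : `|complex.Re a| <= nz a. Proof. by rewrite /nz lerDl. Qed.
Lemma nzIm a : `|complex.Im a| <= nz a. Proof. by rewrite /nz lerDr. Qed.
Lemma nzC (r : R) : nz r%:C = `|r|. Proof. by rewrite /nz /= normr0 addr0. Qed.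
Definition nm p q (M : 'M[C]_(p,q)) : R := \sum_i \sum_j nz (M i j).
Lemma nm_ge0 p q (M : 'M[C]_(p,q)) : 0 <= nm M.
Proof. by apply: sumr_ge0 => i _; apply: sumr_ge0 => j _; exact: nz_ge0. Qed.
Lemma nm_entry p q (M : 'M[C]_(p,q)) i j : nz (M i j) <= nm M.
Proof.
rewrite /nm (bigD1 i) //= (bigD1 j) //= -addrA lerDl.
apply: addr_ge0; first by apply: sumr_ge0 => *; exact: nz_ge0.
by apply: sumr_ge0 => *; apply: sumr_ge0 => *; exact: nz_ge0.
Qed.
Lemma nz_sum (I : finType) (f : I -> C) : nz (\sum_i f i) <= \sum_i nz (f i).
Proof.
elim/big_rec2: _ => [|i y1 y2 _ h]; first by rewrite nz0.
by apply: le_trans (nzD _ _) _; rewrite lerD2l.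
Qed.
Lemma nmD p q (M N : 'M[C]_(p,q)) : nm (M + N) <= nm M + nm N.
Proof.
rewrite /nm -big_split; apply: ler_sum => i _; rewrite -big_split; apply: ler_sum => j _.
rewrite mxE; exact: nzD.
Qed.
Lemma nmN p q (M : 'M[C]_(p,q)) : nm (- M) = nm M.
Proof. by rewrite /nm; apply: eq_bigr => i _; apply: eq_bigr => j _; rewrite mxE nzN. Qed.
Lemma nmB p q (M N : 'M[C]_(p,q)) : nm (M - N) <= nm M + nm N.
Proof. by rewrite -(nmN N); exact: nmD. Qed.
Lemma nmZ p q a (M : 'M[C]_(p,q)) : nm (a *: M) <= nz a * nm M.
Proof.
rewrite /nm mulr_sumr; apply: ler_sum => i _; rewrite mulr_sumr; apply: ler_sum => j _.
rewrite mxE; exact: nzM.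
Qed.
Lemma nmM p q r (M : 'M[C]_(p,q)) (N : 'M[C]_(q,r)) : nm (M *m N) <= nm M * nm N.
Proof.
rewrite /nm mulr_suml; apply: ler_sum => i _.
apply: (@le_trans _ _ (\sum_j \sum_k nz (M i k) * nz (N k j))).
  apply: ler_sum => j _; rewrite mxE; apply: le_trans (nz_sum _) _.
  by apply: ler_sum => k _; exact: nzM.
rewrite exchange_big /= mulr_suml; apply: ler_sum => k _; rewrite -mulr_sumr.
apply: ler_wpM2l; first exact: nz_ge0.
rewrite (bigD1 k) //= lerDl; apply: sumr_ge0 => *; apply: sumr_ge0 => *; exact: nz_ge0.
Qed.
Lemma nm_eq0 p q (M : 'M[C]_(p,q)) : nm M = 0 -> M = 0.
Proof.
move=> h; apply/matrixP => i j; rewrite mxE; apply: nz_eq0.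
by apply/le_anti; rewrite nz_ge0 -h nm_entry.
Qed.
Lemma nmX n (X : 'M[C]_n) k : nm (X ^+ k) <= nm (1%:M : 'M[C]_n) * nm X ^+ k.
Proof.
elim: k => [|k ih]; first by rewrite !expr0 mulr1.
rewrite exprSr exprSr mulrA; apply: le_trans (nmM _ _) _.
by apply: ler_pM => //; [exact: nm_ge0 | exact: nm_ge0].
Qed.
Definition ncvg p q (u : nat -> 'M[C]_(p,q)) L := (fun n => nm (u n - L)) @ \oo --> (0:R).

Lemma cvgD0 (f g : nat -> R) : f @ \oo --> (0:R) -> g @ \oo --> (0:R) ->
  (fun n => f n + g n) @ \oo --> (0:R).
Proof. move=> hf hg; have := cvgD hf hg; rewrite addr0; apply. Qed.
Lemma cvgB0 (f : nat -> R) a : f @ \oo --> a -> (fun n => `|f n - a|) @ \oo --> (0:R).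
Proof. move=> hf; have := cvg_norm (cvgB hf (cvg_cst a)); rewrite subrr normr0; apply. Qed.
Lemma cvgM0 (f : nat -> R) a : f @ \oo --> (0:R) -> (fun n => a * f n) @ \oo --> (0:R).
Proof. move=> hf; have := cvgM (cvg_cst a) hf; rewrite mulr0; apply. Qed.
Lemma squeeze0 (f g : nat -> R) : (forall n, 0 <= f n <= g n) -> g @ \oo --> (0:R) ->
  f @ \oo --> (0:R).
Proof.
move=> h hg; apply: (@squeeze_cvgr _ _ _ _ (fun=> 0) g) => //; last exact: cvg_cst.
by apply: nearW.
Qed.

Lemma cvg_sum0 (I : finType) (f : I -> nat -> R) :
  (forall i, f i @ \oo --> (0:R)) -> (fun n => \sum_i f i n) @ \oo --> (0:R).
Proof.
move=> h; rewrite /index_enum; elim: (Finite.enum I) => [|a r ih].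
  by under eq_fun do rewrite big_nil; exact: cvg_cst.
under eq_fun do rewrite big_cons.
have := cvgD (h a) ih; rewrite addr0; apply.
Qed.

Lemma ReB (a b : C) : complex.Re (a - b) = complex.Re a - complex.Re b.
Proof. by case: a; case: b. Qed.
Lemma ImB (a b : C) : complex.Im (a - b) = complex.Im a - complex.Im b.
Proof. by case: a; case: b. Qed.
Lemma ReD (a b : C) : complex.Re (a + b) = complex.Re a + complex.Re b.
Proof. by case: a; case: b. Qed.
Lemma ImD (a b : C) : complex.Im (a + b) = complex.Im a + complex.Im b.
Proof. by case: a; case: b. Qed.

Lemma ncvg_mx p q (u : nat -> 'M[C]_(p,q)) L : ncvg u L -> mx_cvg u L.
Proof.
move=> h i j; split; apply/cvgrPdist_lt => e e0; near=> n;
  (have hn : `|0 - nm (u n - L)| < e by near: n; exact: (cvgrPdist_lt _ _).1 h e e0);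
  rewrite sub0r normrN ger0_norm ?nm_ge0 // in hn; apply: le_lt_trans hn;
  rewrite distrC; apply: le_trans (nm_entry _ i j); rewrite !mxE ?ReB ?ImB.
- rewrite -ReB; exact: nzRe.
- rewrite -ImB; exact: nzIm.
Unshelve. all: by end_near. Qed.

Lemma mx_ncvg p q (u : nat -> 'M[C]_(p,q)) L : mx_cvg u L -> ncvg u L.
Proof.
move=> h; rewrite /ncvg /nm; apply: cvg_sum0 => i; apply: cvg_sum0 => j.
have [h1 h2] := h i j.
rewrite /nz; under eq_fun do rewrite !mxE ReB ImB.
exact: cvgD0 (cvgB0 h1) (cvgB0 h2).
Qed.
Lemma ncvg_shift p q (u : nat -> 'M[C]_(p,q)) L : ncvg u L -> ncvg (fun n => u n.+1) L.
Proof. by rewrite /ncvg -(cvg_shiftS (fun n => nm (u n - L))). Qed.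

Lemma ncvg_affine p q r (B : 'M[C]_(p,r)) (X : 'M[C]_(p,q)) (u : nat -> 'M[C]_(q,r)) L :
  ncvg u L -> ncvg (fun n => B + X *m u n) (B + X *m L).
Proof.
move=> h; apply: (squeeze0 _ (cvgM0 (nm X) h)) => n.
rewrite nm_ge0 /= opprD addrACA subrr add0r -mulmxN -mulmxDr; exact: nmM.
Qed.

Lemma ncvg_unique p q (u : nat -> 'M[C]_(p,q)) L1 L2 : ncvg u L1 -> ncvg u L2 -> L1 = L2.
Proof.
move=> h1 h2; have h := cvgD0 h1 h2.
have : nm (L1 - L2) <= 0.
  apply: (ler_cvg_to (cvg_cst _) h); apply: nearW => n.
  have -> : L1 - L2 = (u n - L2) - (u n - L1).
    by rewrite opprB addrCA addrAC subrr add0r.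
  by apply: le_trans (nmB _ _) _; rewrite addrC.
move=> hle; apply/eqP; rewrite -subr_eq0; apply/eqP; apply: nm_eq0.
by apply/le_anti; rewrite hle nm_ge0.
Qed.
Definition Pk n k (X : 'M[C]_n) N := \sum_(j < N) ((j + k)`!%:R)^-1 *: X ^+ j.

Lemma Pk_S n k (X : 'M[C]_n) N : Pk k X N.+1 = ((k`!%:R)^-1)%:M + X *m Pk k.+1 X N.
Proof.
rewrite /Pk big_ord_recl /= add0n expr0 scalemx1; congr (_ + _).
rewrite mulmx_sumr; apply: eq_bigr => j _.
by rewrite /bump /= add1n addSnnS exprS -scalemxAr mulmxE.
Qed.

Lemma nm_sum p q (I : finType) (f : I -> 'M[C]_(p,q)) : nm (\sum_i f i) <= \sum_i nm (f i).
Proof.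
elim/big_rec2: _ => [|i y1 y2 _ h].
  by rewrite /nm big1 // => i _; rewrite big1 // => j _; rewrite mxE nz0.
by apply: le_trans (nmD _ _) _; rewrite lerD2l.
Qed.

Lemma fact_mul j k : (j`! * k`! <= (j + k)`!)%N.
Proof.
elim: j => [|j ih]; first by rewrite fact0 mul1n.
rewrite addSn !factS -mulnA; apply: leq_mul => //; exact: leq_addr.
Qed.

Lemma nz_invn n : nz ((n%:R : C)^-1) = (n%:R : R)^-1.
Proof.
rewrite -(rmorph_nat (real_complex R)) -fmorphV nzC ger0_norm // invr_ge0 ler0n.
Qed.

Lemma term_bound n k (X : 'M[C]_n) j :
  nm (((j + k)`!%:R)^-1 *: X ^+ j) <= (k`!%:R)^-1 * (nm (1%:M : 'M[C]_n) * exp_coeff (nm X) j).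
Proof.
apply: le_trans (nmZ _ _) _; rewrite nz_invn /exp_coeff /=.
have -> : (k`!%:R)^-1 * (nm (1%:M : 'M[C]_n) * (nm X ^+ j / j`!%:R)) =
   ((j`!%:R)^-1 * (k`!%:R)^-1) * (nm (1%:M : 'M[C]_n) * nm X ^+ j) by ring.
apply: ler_pM.
- by rewrite invr_ge0 ler0n.
- exact: nm_ge0.
- rewrite -invfM -natrM lef_pV2 ?posrE ?ltr0n ?fact_gt0 ?muln_gt0 ?fact_gt0 //.
  by rewrite ler_nat fact_mul.
- exact: nmX.
Qed.
Lemma phi_cvg n k (X : 'M[C]_n) : ncvg (Pk k X) (phi k X).
Proof.
apply: mx_ncvg => i l.
pose M := (k`!%:R)^-1 * nm (1%:M : 'M[C]_n).
have key : forall (g : C -> R), (forall z, `|g z| <= nz z) ->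
    (forall a b, g (a + b) = g a + g b) -> g 0 = 0 ->
    cvgn (fun N => g (Pk k X N i l)).
  move=> g gb gD g0.
  have -> : (fun N => g (Pk k X N i l)) =
      series (fun j => g ((((j + k)`!%:R)^-1 *: X ^+ j) i l)).
    apply/funext => N; rewrite /Pk summxE /series /= big_mkord.
    by elim/big_rec2: _ => [|j y1 y2 _ <-]; rewrite ?g0 ?gD.
  apply: normed_cvg; apply: (@series_le_cvg _ _ (fun j => M * exp_coeff (nm X) j)).
  - by move=> j; rewrite normr_ge0.
  - by move=> j; rewrite mulr_ge0 ?exp_coeff_ge0 ?nm_ge0 // /M mulr_ge0 ?nm_ge0 // invr_ge0 ler0n.
  - move=> j; apply: le_trans (gb _) _; apply: le_trans (nm_entry _ i l) _.
    by apply: le_trans (term_bound _ _ _) _; rewrite /M mulrA.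
  - have -> : series (fun j => M * exp_coeff (nm X) j) = (fun=> M) \* series (exp_coeff (nm X)).
      by apply/funext => N; rewrite /series /= big_distrr.
    apply: is_cvgM; [exact: is_cvg_cst | exact: is_cvg_series_exp_coeff].
rewrite /phi /mx_lim mxE /=; split.
- exact: (key (@complex.Re R) nzRe ReD).
- exact: (key (@complex.Im R) nzIm ImD).
Qed.
Lemma phiS n k (X : 'M[C]_n) : phi k X = ((k`!%:R)^-1)%:M + X *m phi k.+1 X.
Proof.
apply: (ncvg_unique (ncvg_shift (phi_cvg k X))).
rewrite (_ : (fun N => Pk k X N.+1) = fun N => ((k`!%:R)^-1)%:M + X *m Pk k.+1 X N).
  exact: ncvg_affine (phi_cvg _ _).
by apply/funext => N; rewrite Pk_S.
Qed.

Lemma phi_bound n k (X : 'M[C]_n) :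
  nm (phi k X) <= (k`!%:R)^-1 * nm (1%:M : 'M[C]_n) * limn (series (exp_coeff (nm X))).
Proof.
set B := _ * _ * _.
have hP : forall N, nm (Pk k X N) <= B.
  move=> N; apply: le_trans (nm_sum _) _.
  apply: (@le_trans _ _ (\sum_(j < N) (k`!%:R)^-1 * (nm (1%:M : 'M[C]_n) * exp_coeff (nm X) j))).
    by apply: ler_sum => j _; exact: term_bound.
  rewrite -big_distrr /B -mulrA; apply: ler_wpM2l; first by rewrite invr_ge0 ler0n.
  rewrite -big_distrr; apply: ler_wpM2l; first exact: nm_ge0.
  have hnd : nondecreasing_seq (series (exp_coeff (nm X))).
    by apply: nondecreasing_series => j _ _; exact: exp_coeff_ge0 (nm_ge0 _).
  have := nondecreasing_cvgn_le hnd (is_cvg_series_exp_coeff _) N.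
  by rewrite /series /= big_mkord.
have h := phi_cvg k X.
have hg : (fun N => nm (Pk k X N - phi k X) + B) @ \oo --> (0 + B).
  have := cvgD h (cvg_cst B); apply.
have := ler_cvg_to (cvg_cst (nm (phi k X))) hg; rewrite add0r; apply.
apply: nearW => N.
rewrite -[in X in X <= _](subrK (Pk k X N) (phi k X)) -opprB.
apply: le_trans (nmD _ _) _; by rewrite nmN lerD2l.
Qed.
Lemma exprSmx n (X : 'M[C]_n) k : X ^+ k.+1 = X ^+ k *m X.
Proof. by rewrite exprSr. Qed.
Lemma expr0mx n (X : 'M[C]_n) : X ^+ 0 = 1%:M.
Proof. by rewrite expr0. Qed.

Lemma term_aux n m (P : 'M[C]_n) (v : 'cV[C]_n) (M : 'rV[C]_m) (e : 'cV[C]_m) :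
  P *m (v *m M) *m e = (M *m e) 0 0 *: (P *m v).
Proof.
by rewrite -!mulmxA {1}(mx11_scalar (M *m e)) mul_mx_scalar scalemxAr.
Qed.

Lemma main_gen N m (A : 'M[C]_N) (Vm : 'M[C]_(N,m)) (v : 'cV[C]_N) (Bm : 'M[C]_m)
  (w : 'rV[C]_m) (t : C) (e1 : 'cV[C]_m) :
  A *m Vm = Vm *m Bm + v *m w ->
  ncvg (fun n => \sum_(k < n) (t * (w *m phi k.+1 (t *: Bm) *m e1) 0 0) *: ((t *: A) ^+ k *m v))
       (phi 0 (t *: A) *m Vm *m e1 - Vm *m phi 0 (t *: Bm) *m e1).
Proof.
move=> hA.
set X := t *: A; set Y := t *: Bm.
have hVY : Vm *m Y = X *m Vm - v *m (t *: w).
  by rewrite /X /Y -scalemxAr -scalemxAl hA scalerDr -scalemxAr addrK.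
pose D k := phi k X *m Vm - Vm *m phi k Y.
have hD : forall k, D k = X *m D k.+1 + v *m (t *: w *m phi k.+1 Y).
  move=> k; rewrite /D (phiS k X) (phiS k Y) mulmxDl [Vm *m (_ + _)]mulmxDr.
  rewrite mul_scalar_mx mul_mx_scalar [Vm *m (Y *m _)]mulmxA hVY mulmxBl mulmxBr ?mulmxN !mulmxA.
  by rewrite opprD opprB addrACA subrr add0r addrA addrAC.
have hIt : forall n, D 0 = \sum_(i < n) X ^+ i *m (v *m (t *: w *m phi i.+1 Y)) + X ^+ n *m D n.
  elim => [|n ih]; first by rewrite big_ord0 add0r expr0mx mul1mx.
  rewrite ih (hD n) mulmxDr mulmxA -exprSmx big_ord_recr /=.
  by rewrite addrA addrAC; congr (_ + _ + _).
have hterm : forall i, X ^+ i *m (v *m (t *: w *m phi i.+1 Y)) *m e1 =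
    (t * (w *m phi i.+1 Y *m e1) 0 0) *: (X ^+ i *m v).
  by move=> i; rewrite term_aux -!scalemxAl mxE.
have hS : forall n, \sum_(k < n) (t * (w *m phi k.+1 Y *m e1) 0 0) *: (X ^+ k *m v)
    - (phi 0 X *m Vm *m e1 - Vm *m phi 0 Y *m e1) = - (X ^+ n *m D n *m e1).
  move=> n; rewrite -mulmxBl -/(D 0) (hIt n) mulmxDl mulmx_suml.
  under [X in _ - (X + _)]eq_bigr do rewrite hterm.
  by rewrite opprD addrA subrr add0r.
rewrite /ncvg; under eq_fun do rewrite hS nmN.
pose x := nm X.
pose EX := limn (series (exp_coeff (nm X))).
pose EY := limn (series (exp_coeff (nm Y))).
pose n1 := nm (1%:M : 'M[C]_N).
pose n2 := nm (1%:M : 'M[C]_m).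
pose K := n1 * EX * nm Vm + nm Vm * (n2 * EY).
have EXge0 : 0 <= EX.
  apply: (le_trans _ (nondecreasing_cvgn_le _ (is_cvg_series_exp_coeff _) 0)).
    by rewrite /series /= big_geq.
  by apply: nondecreasing_series => j _ _; exact: exp_coeff_ge0 (nm_ge0 _).
have EYge0 : 0 <= EY.
  apply: (le_trans _ (nondecreasing_cvgn_le _ (is_cvg_series_exp_coeff _) 0)).
    by rewrite /series /= big_geq.
  by apply: nondecreasing_series => j _ _; exact: exp_coeff_ge0 (nm_ge0 _).
apply: (squeeze0 _ (cvgM0 (n1 * K * nm e1) (cvg_exp_coeff x))) => n.
rewrite nm_ge0 /=.
have b2 : nm (D n) <= (n`!%:R)^-1 * K.
  apply: le_trans (nmB _ _) _; apply: le_trans (lerD (nmM _ _) (nmM _ _)) _.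
  rewrite /K mulrDr; apply: lerD.
    have -> : (n`!%:R)^-1 * (n1 * EX * nm Vm) = ((n`!%:R)^-1 * n1 * EX) * nm Vm by ring.
    by apply: ler_wpM2r; [exact: nm_ge0 | exact: phi_bound].
  have -> : (n`!%:R)^-1 * (nm Vm * (n2 * EY)) = nm Vm * ((n`!%:R)^-1 * n2 * EY) by ring.
  by apply: ler_wpM2l; [exact: nm_ge0 | exact: phi_bound].
apply: le_trans (nmM _ _) _.
apply: (@le_trans _ _ ((n1 * x ^+ n) * ((n`!%:R)^-1 * K) * nm e1)).
  apply: ler_wpM2r; first exact: nm_ge0.
  apply: le_trans (nmM _ _) _.
  apply: ler_pM; [exact: nm_ge0 | exact: nm_ge0 | exact: nmX | exact: b2].
rewrite /exp_coeff /=; rewrite le_eqVlt; apply/orP; left; apply/eqP; ring.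
Qed.






Lemma ncvg_scale p q (u : nat -> 'M[C]_(p,q)) L a : ncvg u L -> ncvg (fun n => a *: u n) (a *: L).
Proof.
move=> h; apply: (squeeze0 _ (cvgM0 (nz a) h)) => n.
by rewrite nm_ge0 /= -scalerBr nmZ.
Qed.

Lemma mx_cvg_ext p q (u u' : nat -> 'M[C]_(p,q)) L :
  (forall n, u n = u' n) -> mx_cvg u L -> mx_cvg u' L.
Proof. by move=> e; have -> : u' = u by apply/funext => n; rewrite e. Qed.

Lemma norm2_neq0 N (c : 'cV[C]_N) : c != 0 -> norm2 c != 0.
Proof.
apply: contra => /eqP h; rewrite /norm2 in h.
have h1 : Num.sqrt (\sum_i (complex.Re (c i 0) ^+ 2 + complex.Im (c i 0) ^+ 2)) = 0.
  by case: h.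
have h2 : \sum_i (complex.Re (c i 0) ^+ 2 + complex.Im (c i 0) ^+ 2) = 0.
  apply/le_anti; rewrite -sqrtr_eq0 h1 eqxx /=.
  by apply: sumr_ge0 => i _; rewrite addr_ge0 // sqr_ge0.
have h3 := psumr_eq0P (fun i _ => addr_ge0 (sqr_ge0 (complex.Re (c i 0))) (sqr_ge0 (complex.Im (c i 0)))) h2.
apply/eqP/matrixP => i j; rewrite (ord1 j) mxE.
have := h3 i isT; case: (c i 0) => a b /= hab.
have ha : a ^+ 2 = 0 by have := sqr_ge0 a; have := sqr_ge0 b; lra.
have hb : b ^+ 2 = 0 by have := sqr_ge0 a; have := sqr_ge0 b; lra.
by move/eqP: ha; rewrite sqrf_eq0 => /eqP ->; move/eqP: hb; rewrite sqrf_eq0 => /eqP ->.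
Qed.
End S.

Unset Implicit Arguments.
Local Open Scope ring_scope.
Local Open Scope complex_scope.

Theorem theorem4p3 (R : realType) (N m : nat) (A : 'M[R[i]]_N) (c : 'cV[R[i]]_N)
  (hi : R) (Vm : 'M[R[i]]_(N, m.+1)) (v : 'cV[R[i]]_N) (H : 'M[R[i]]_m.+1)
  (h : R[i]) (pinv : nat -> R[i]) :
  c != 0 ->
  0 < hi ->
  (* poles are not eigenvalues of A *)
  (forall j, (j <= m)%N -> pinv j != 0 -> ~~ eigenvalue A (pinv j)^-1) ->
  (* final pole is infinite *)
  pinv m = 0 ->
  (* rational Arnoldi decomposition *)
  let V := row_mx Vm v in
  let em : 'rV[R[i]]_m.+1 := delta_mx 0 ord_max in
  let e1 : 'cV[R[i]]_m.+1 := delta_mx ord0 0 in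
  let K := 1%:M + H *m diag_mx (\row_(j < m.+1) pinv j) in
  adjmx V *m V = 1%:M ->
  Vm *m e1 = (norm2 c)^-1 *: c ->
  (Vm^T == krylov_rat A c pinv m.+1)%MS ->
  (V^T == krylov_rat A c pinv m.+2)%MS ->
  A *m V *m col_mx K ((h * pinv m) *: em) = V *m col_mx H (h *: em) ->
  K \in unitmx ->
  (* conclusion: the series converges to the error *)
  mx_series
    (fun k => ((hi%:C * norm2 c * h) *
               (em *m invmx K *m phi k.+1 (hi%:C *: (H *m invmx K)) *m e1) 0 0)
              *: ((hi%:C *: A) ^+ k *m v))
    (mexp (hi%:C *: A) *m c - norm2 c *: (Vm *m mexp (hi%:C *: (H *m invmx K)) *m e1)).
Proof.
move=> hc _ _ hpm V em e1 K _ hVe1 _ _ hArn hK.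
have hs := norm2_neq0 hc.
set s := norm2 c in hs hVe1 *.
have hA : A *m Vm = Vm *m (H *m invmx K) + v *m (h *: (em *m invmx K)).
  move: hArn; rewrite /V hpm mulr0 scale0r mul_mx_row !mul_row_col mulmx0 addr0 => hArn.
  by rewrite -(mulmxK hK (A *m Vm)) hArn mulmxDl -!mulmxA scalemxAl.
have := main_gen (hi%:C) e1 hA.
move=> /(ncvg_scale s) /ncvg_mx.
rewrite /mx_series /mexp.
move=> hh.
have hc' : c = s *: (Vm *m e1) by rewrite hVe1 scalerA mulfV // scale1r.
have E1 : phi 0 (hi%:C *: A) *m c - s *: (Vm *m phi 0 (hi%:C *: (H *m invmx K)) *m e1) =
    s *: (phi 0 (hi%:C *: A) *m Vm *m e1 - Vm *m phi 0 (hi%:C *: (H *m invmx K)) *m e1).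
  by rewrite {1}hc' -scalemxAr mulmxA scalerBr.
rewrite E1.
apply: (mx_cvg_ext _ hh) => n; rewrite scaler_sumr; apply: eq_bigr => k _.
rewrite scalerA; congr (_ *: _); rewrite -!scalemxAl mxE; ring.
Qed.
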